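(* Let $C$ be a finite non-degenerate projective configuration with lines $l_0,l_1,\dots,l_n$, let $\mathcal{P}_0$ be the set of its points not incident to $l_0$, and let $\mathcal{A}=\{(i,p)\in\{1,\dots,n\}\times\mathcal{P}_0 : p \text{ is incident to } l_i\}$. Let $L=\bigoplus_{k\ge1}L_k$ be the free Lie algebra over $\mathbb{Z}$ on $x_1,\dots,x_n$, graded by degree, $H=L_1$, $S_p=\sum_{j:\,p\prec l_j}x_j$ for $p\in\mathcal{P}_0$, $R_2\subset L_2$ the subgroup spanned by the elements $\bar r(i,p)=[x_i,S_p]$ for $(i,p)\in\mathcal{A}$ with $i\neq\min\{j:l_j\succ p\}$ (a $\mathbb{Z}$-basis of $R_2$), $P_2=L_2/R_2$, $R_3=[H,R_2]$, $P_3=L_3/R_3$. The Lie bracket induces a well-defined bilinear map $H\times P_2\to P_3$, $(x,y+R_2)\mapsto[x,y]+R_3$. For $f\in\mathrm{Hom}(H,P_2)$ let $\bar\delta f\in\mathrm{Hom}(R_2,P_3)$ be the restriction to $R_2$ of the homomorphism $L_2\to P_3$ given by $[x,y]\mapsto[x,f(y)]-[y,f(x)]$ for $x,y\in H$. Let $A=H^{\mathcal{A}}$ and define $\tilde\tau:A\to\mathrm{Hom}(R_2,P_3)$ on the basis of $R_2$ by $$\tilde\tau a(\bar r(i,p))=[[x_i,a(i,p)],S_p]+\Big[x_i,\sum_{j:\,p\prec l_j}[x_j,a(j,p)]\Big]+R_3 .$$ Let $B\subseteq A$ be the subgroup of maps $a$ that do not depend on $p$, i.e. $a(i,p)=a(i,q)$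 whenever $(i,p),(i,q)\in\mathcal{A}$. Then $\tilde\tau(B)\subseteq\bar\delta\,\mathrm{Hom}(H,P_2)$.
   Context: A projective configuration is a triple $(\mathcal{L},\mathcal{P},\succ)$ of a set of lines, a set of points and an incidence relation between them (written $l\succ p$ or $p\prec l$) such that any two distinct lines are incident to a unique common point and every point is incident to at least two lines; it is non-degenerate if it has more than one point. $L_2$ is identified with $\Lambda^2H$ via $x\wedge y\mapsto[x,y]$. *)

(* Defs.v *)
From HB Require Import structures.
From mathcomp Require Import all_boot all_order all_algebra.
Set Implicit Arguments. Unset Strict Implicit. Unset Printing Implicit Defensive.
Import Order.TTheory GRing.Theory Num.Theory.
Local Open Scope ring_scope.

(* The free Lie ring L on x_0..x_(n-1) (paper: x_1..x_n) is realised inside the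
   free associative ring (tensor ring) over Z on the same generators; the
   homogeneous components T^1, T^2, T^3 are integer-valued functions on
   'I_n, 'I_n^2, 'I_n^3.  L_1 = H = T^1, L_k = Z-span of iterated brackets. *)
Notation T1 n := {ffun 'I_n -> int}.
Notation T2 n := {ffun 'I_n * 'I_n -> int}.
Notation T3 n := {ffun 'I_n * 'I_n * 'I_n -> int}.

Section LieDefs.
Variable n : nat.

Definition gen (j : 'I_n) : T1 n := [ffun k => (k == j)%:Z].

Definition tens11 (x y : T1 n) : T2 n := [ffun ij => x ij.1 * y ij.2].
Definition tens12 (x : T1 n) (u : T2 n) : T3 n :=
  [ffun ijk => x ijk.1.1 * u (ijk.1.2, ijk.2)].
Definition tens21 (u : T2 n) (x : T1 n) : T3 n :=
  [ffun ijk => u (ijk.1.1, ijk.1.2) * x ijk.2].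

Definition br11 (x y : T1 n) : T2 n := tens11 x y - tens11 y x.
Definition br12 (x : T1 n) (u : T2 n) : T3 n := tens12 x u - tens21 u x.
Definition br21 (u : T2 n) (x : T1 n) : T3 n := tens21 u x - tens12 x u.

Definition inL2 (u : T2 n) : Prop :=
  exists c : 'I_n -> 'I_n -> int,
    u = \sum_(i < n) \sum_(j < n) br11 (gen i) (gen j) *~ c i j.

(* The homomorphism L_2 -> L_3 (lifting L_2 -> P_3) induced by a lift
   g : x_j |-> g j of f in Hom(H, P_2):  [x_i, x_j] |-> [x_i, f x_j] - [x_j, f x_i],
   extended linearly using the Z-basis [x_i,x_j] (i<j) of L_2. *)
Definition deltaL (g : 'I_n -> T2 n) (u : T2 n) : T3 n :=
  \sum_(i < n) \sum_(j < n | (i < j)%N)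
     (br12 (gen i) (g j) - br12 (gen j) (g i)) *~ u (i, j).
End LieDefs.

Section ConfigDefs.
(* Projective configuration: lines l_0..l_n indexed by 'I_n.+1, points P,
   incidence inc l p  (l \succ p).  Generator x_j ('I_n) corresponds to the
   line l_(j+1) = lift ord0 j. *)
Variables (n : nat) (P : finType) (inc : 'I_n.+1 -> P -> bool).

Definition is_projective_configuration : Prop :=
  (forall l m : 'I_n.+1, l != m -> exists! p : P, inc l p && inc m p) /\
  (forall p : P, exists l m : 'I_n.+1, l != m /\ inc l p /\ inc m p).

Definition non_degenerate : Prop := (1 < #|P|)%N.

Definition lineof (j : 'I_n) : 'I_n.+1 := lift ord0 j.

Definition inA (i : 'I_n) (p : P) : bool := ~~ inc ord0 p && inc (lineof i) p.

(* min { j : l_j \succ p } (among j >= 1), as a natural index of generators *)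
Definition minline (p : P) : nat :=
  \big[minn/n]_(j < n | inc (lineof j) p) (j : nat).

Definition basisidx (i : 'I_n) (p : P) : bool := inA i p && ((i : nat) != minline p).

Definition Sp (p : P) : T1 n := \sum_(j < n | inc (lineof j) p) gen j.

Definition rbar (i : 'I_n) (p : P) : T2 n := br11 (gen i) (Sp p).

Definition inR2 (u : T2 n) : Prop :=
  exists c : 'I_n -> P -> int,
    u = \sum_(i < n) \sum_(p | basisidx i p) rbar i p *~ c i p.

Definition inR3 (v : T3 n) : Prop :=
  exists s : seq (T1 n * T2 n),
    (forall xr, xr \in s -> inR2 xr.2) /\
    v = \sum_(xr <- s) br12 xr.1 xr.2.

(* a lift to L_3 of \tilde\tau a (\bar r(i,p)) *)
Definition tau (a : 'I_n -> P -> T1 n) (i : 'I_n) (p : P) : T3 n :=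
  br21 (br11 (gen i) (a i p)) (Sp p) +
  br12 (gen i) (\sum_(j < n | inc (lineof j) p) br11 (gen j) (a j p)).

Definition inB (a : 'I_n -> P -> T1 n) : Prop :=
  forall (i : 'I_n) (p q : P), inA i p -> inA i q -> a i p = a i q.
End ConfigDefs.

(* Main.v *)
Require Import Defs.
From mathcomp Require Import all_boot all_order all_algebra.
From mathcomp Require Import zify ring.
Import GRing.Theory.
Local Open Scope ring_scope.

Section Aux.
Variable n : nat.

Lemma tens12D (x : T1 n) u v : tens12 x (u + v) = tens12 x u + tens12 x v.
Proof. by apply/ffunP => k; rewrite !ffunE mulrDr. Qed.
Lemma tens21D (x : T1 n) u v : tens21 (u + v) x = tens21 u x + tens21 v x.
Proof. by apply/ffunP => k; rewrite !ffunE mulrDl. Qed.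
Lemma tens12Dl (x y : T1 n) u : tens12 (x + y) u = tens12 x u + tens12 y u.
Proof. by apply/ffunP => k; rewrite !ffunE mulrDl. Qed.
Lemma tens21Dr (x y : T1 n) u : tens21 u (x + y) = tens21 u x + tens21 u y.
Proof. by apply/ffunP => k; rewrite !ffunE mulrDr. Qed.
Lemma tens11D (x y z : T1 n) : tens11 x (y + z) = tens11 x y + tens11 x z.
Proof. by apply/ffunP => k; rewrite !ffunE mulrDr. Qed.
Lemma tens11Dl (x y z : T1 n) : tens11 (y + z) x = tens11 y x + tens11 z x.
Proof. by apply/ffunP => k; rewrite !ffunE mulrDl. Qed.

Lemma br12D (x : T1 n) u v : br12 x (u + v) = br12 x u + br12 x v.
Proof. rewrite /br12 tens12D tens21D; apply/ffunP => k; rewrite !ffunE; ring. Qed.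
Lemma br12Dl (x y : T1 n) u : br12 (x + y) u = br12 x u + br12 y u.
Proof. rewrite /br12 tens12Dl tens21Dr; apply/ffunP => k; rewrite !ffunE; ring. Qed.
Lemma br11D (x y z : T1 n) : br11 x (y + z) = br11 x y + br11 x z.
Proof. rewrite /br11 tens11D tens11Dl; apply/ffunP => k; rewrite !ffunE; ring. Qed.
Lemma br120 (x : T1 n) : br12 x 0 = 0.
Proof. by apply/ffunP => k; rewrite !ffunE !mulr0 mul0r subrr. Qed.
Lemma br120l (u : T2 n) : br12 0 u = 0.
Proof. by apply/ffunP => k; rewrite !ffunE !mulr0 mul0r subrr. Qed.
Lemma br110 (x : T1 n) : br11 x 0 = 0.
Proof. by apply/ffunP => k; rewrite !ffunE !mulr0 mul0r subrr. Qed.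
Lemma br11Mz (x y : T1 n) z : br11 x (y *~ z) = br11 x y *~ z.
Proof. apply/ffunP => k; rewrite !(ffunMzE, ffunE) mulrzAr mulrzAl -mulrzBl; reflexivity. Qed.
Lemma br21E (u : T2 n) x : br21 u x = - br12 x u.
Proof. by rewrite /br21 /br12 opprB. Qed.


Lemma decomp1 (x : T1 n) : x = \sum_(k < n) gen k *~ x k.
Proof.
apply/ffunP => k; rewrite sum_ffunE (bigD1 k) //= big1 ?addr0.
  by rewrite ffunMzE ffunE eqxx intz.
by move=> l; rewrite eq_sym => /negbTE hl; rewrite ffunMzE ffunE hl mul0rz.
Qed.

Lemma inL2_br (j : 'I_n) (x : T1 n) : inL2 (br11 (gen j) x).
Proof.
exists (fun i k => if i == j then x k else 0).
rewrite (bigD1 j) //= [X in _ + X]big1 ?addr0 => [|i /negbTE ->]; last first.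
  by apply: big1 => k _; rewrite mulr0z.
rewrite eqxx {1}(decomp1 x) (big_morph (br11 (gen j)) (br11D _) (br110 _)).
by apply: eq_bigr => k _; rewrite br11Mz.
Qed.

Lemma deltaLD (g : 'I_n -> T2 n) (u v : T2 n) : deltaL g (u + v) = deltaL g u + deltaL g v.
Proof.
rewrite /deltaL -big_split; apply: eq_bigr => i _; rewrite -big_split.
by apply: eq_bigr => j _; rewrite ffunE mulrzDr.
Qed.
Lemma deltaL0 (g : 'I_n -> T2 n) : deltaL g 0 = 0.
Proof. by rewrite /deltaL big1 // => i _; rewrite big1 // => j _; rewrite ffunE mulr0z. Qed.

Lemma bz (b1 b2 : bool) : (b1%:Z * b2%:Z) = (b1 && b2)%:Z.
Proof. by case: b1; case: b2. Qed.

Lemma sum_ind (F : 'I_n -> 'I_n -> T3 n) (i j : 'I_n) :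
  \sum_(a < n) \sum_(b < n | (a < b)%N) F a b *~ ((a == i) && (b == j))%:Z
  = if (i < j)%N then F i j else 0.
Proof.
rewrite (bigD1 i) //= [X in _ + X]big1 ?addr0 => [|a /negbTE ->]; last first.
  by apply: big1 => b _; rewrite mulr0z.
rewrite eqxx /=; case: ltnP => h.
  rewrite (bigD1 j) //= eqxx [X in _ + X]big1 ?addr0 // => b /andP[_ /negbTE ->].
  by rewrite mulr0z.
apply: big1 => b hb; case: eqP => [e|_]; last by rewrite mulr0z.
by subst b; rewrite ltnNge h in hb.
Qed.

Lemma deltaL_gen (g : 'I_n -> T2 n) (i j : 'I_n) :
  deltaL g (br11 (gen i) (gen j)) = br12 (gen i) (g j) - br12 (gen j) (g i).
Proof.
set D := fun a b : 'I_n => br12 (gen a) (g b) - br12 (gen b) (g a).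
transitivity (\sum_(a < n) \sum_(b < n | (a < b)%N) D a b *~ ((a == i) && (b == j))%:Z
  - \sum_(a < n) \sum_(b < n | (a < b)%N) D a b *~ ((a == j) && (b == i))%:Z).
  rewrite /deltaL -sumrB; apply: eq_bigr => a _; rewrite -sumrB.
  by apply: eq_bigr => b _; rewrite !ffunE /= mulrzBr !bz.
rewrite !sum_ind; case: (ltngtP i j) => h.
- by rewrite subr0.
- by rewrite sub0r /D opprB.
- have ij : i = j by apply: val_inj.
  by subst j; rewrite !subrr.
Qed.

End Aux.
Arguments br11D {n}. Arguments br110 {n}. Arguments br12D {n}. Arguments br120 {n}.
Arguments br12Dl {n}. Arguments br120l {n}. Arguments deltaLD {n}. Arguments deltaL0 {n}.

Theorem proposition2p5 (n : nat) (P : finType) (inc : 'I_n.+1 -> P -> bool)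
  (hconf : is_projective_configuration inc) (hnd : non_degenerate P)
  (a : 'I_n -> P -> T1 n) (haB : inB inc a) :
  exists g : 'I_n -> T2 n,
    (forall j, inL2 (g j)) /\
    (forall (i : 'I_n) (p : P), basisidx inc i p ->
       inR3 inc (tau inc a i p - deltaL g (rbar inc i p))).
Proof.
pose b := fun j => if [pick p | inA inc j p] is Some p then a j p else 0.
exists (fun j => br11 (gen j) (b j)); split; first by move=> j; apply: inL2_br.
move=> i p hb; exists [::]; split => //; rewrite big_nil.
apply/eqP; rewrite subr_eq0; apply/eqP.
have /andP[/andP[hp0 hip] _] := hb.
have hbj : forall j, inc (lineof j) p -> a j p = b j.
  move=> j hj; rewrite /b; case: pickP => [q hq|none].
    by apply: haB => //; rewrite /inA hp0.
  by have := none p; rewrite /inA hp0 hj.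
rewrite /tau /rbar /Sp.
rewrite (big_morph (br11 (gen i)) (br11D _) (br110 _)).
rewrite (big_morph (deltaL _) (deltaLD _) (deltaL0 _)).
under eq_bigr do rewrite deltaL_gen.
rewrite (hbj i hip).
under [X in br12 (gen i) X]eq_bigr => j hj do rewrite (hbj j hj).
rewrite br21E (big_morph (br12 (gen i)) (br12D _) (br120 _)).
rewrite (big_morph (fun x => br12 x (br11 (gen i) (b i))) (fun x y => br12Dl x y _) (br120l _)).
by rewrite [RHS]sumrB addrC.
Qed.
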